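(* Let $p$ be a prime, $d\geq3$ odd, $n\geq2$, $q=p^f$ with $f\in\{1,2,\ldots\}\cup\{\infty\}$ (convention $p^\infty=0$, $f\geq2$ if $p=2$), and let $G=\langle x_1,\ldots,x_d\mid r_0\rangle$ be a one-relator pro-$p$ group (minimal presentation) with $r_0=x_1^q[x_1,{}_n\,x_2][x_2,x_3][x_4,x_5]\cdots[x_{d-1},x_d]\cdot s$, where $s\in S''$ and $S$ is the closed subgroup generated by $x_3,\ldots,x_d$. Then every defined $3$-fold Massey product in $H^\bullet(G,\mathbb{F}_p)$ vanishes if and only if $q\neq3$.
   Context: Commutators $[x,y]=x^{-1}y^{-1}xy$, $[y,{}_k x]$ left-normed; $H''$ is the closed commutator subgroup of $H'$. For $\psi_1,\ldots,\psi_m\in H^1(G,\mathbb{F}_p)=\mathrm{Hom}(G,\mathbb{F}_p)$, $\langle\psi_1,\ldots,\psi_m\rangle\subseteq H^2(G,\mathbb{F}_p)$ is the standard $m$-fold Massey product; it is defined if nonempty and vanishes if it contains $0$. Equivalently, with $\mathbb{U}_{m+1}$ the upper unitriangular $(m+1)\times(m+1)$ matrices over $\mathbb{F}_p$ and $Z$ its center: defined iff there is a continuous homomorphism $G\to\mathbb{U}_{m+1}/Z$ with $(i,i+1)$-entries $\psi_i$, and vanishing iff there is a continuous homomorphism $G\to\mathbb{U}_{m+1}$ with $(i,i+1)$-entries $\psi_i$. *)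

(* Defs.v *)
From HB Require Import structures.
From mathcomp Require Import all_boot all_order all_algebra all_fingroup all_solvable.
Set Implicit Arguments. Unset Strict Implicit. Unset Printing Implicit Defensive.
Import GRing.Theory.
Local Open Scope group_scope.

(* Elements of the free pro-p group F on generators x_1..x_d (indexed by 'I_d,
   x_{k+1} <-> index k) are encoded, as usual, as natural families of
   "evaluations" into finite p-groups: an element w of F is the same thing as
   a rule assigning to every tuple g of elements of a finite group generating
   a p-group the value w(g) (the image of w under the unique continuous
   homomorphism F -> <<g>> sending x_i to g_i), compatibly with all group
   morphisms. *)
Record pword (p d : nat) := PWord {
  pw_ev : forall gT : finGroupType, ('I_d -> gT) -> gT;
  pw_nat : forall (gT hT : finGroupType) (D : {group gT})
             (f : {morphism D >-> hT}) (g : 'I_d -> gT),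
      p.-group <<[set g i | i : 'I_d]>> -> (forall i, g i \in D) ->
      f (pw_ev g) = pw_ev (fun i => f (g i));
  (* implied by naturality (apply it to the inclusion of <<g>>); kept for
     convenience *)
  pw_mem : forall (gT : finGroupType) (g : 'I_d -> gT),
      p.-group <<[set g i | i : 'I_d]>> ->
      pw_ev g \in <<[set g i | i : 'I_d]>>
}.

(* s lies in S'', S the closed subgroup generated by x_3, ..., x_d:
   equivalently its image under every continuous morphism into a finite
   p-group lies in the second derived subgroup of the image of S. *)
Definition in_S2 (p d : nat) (s : pword p d) : Prop :=
  forall (gT : finGroupType) (g : 'I_d -> gT),
    p.-group <<[set g i | i : 'I_d]>> ->
    pw_ev s g \in (<<[set g i | i : 'I_d & 2 <= i]>>)^`(2).

(* access generator number k (0-based), 1 if out of range *)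
Definition gat (d : nat) (gT : finGroupType) (g : 'I_d -> gT) (k : nat) : gT :=
  odflt 1%g (omap g (insub k)).

Definition iterc (gT : finGroupType) (y x : gT) (n : nat) : gT :=
  iter n (fun z => [~ z, x]%g) y.

(* evaluation of r_0 = x_1^q [x_1,_n x_2][x_2,x_3][x_4,x_5]...[x_{d-1},x_d] s *)
Definition relator (p d q n : nat) (s : pword p d)
    (gT : finGroupType) (g : 'I_d -> gT) : gT :=
  (gat g 0 ^+ q * iterc (gat g 0) (gat g 1) n
   * (\prod_(1 <= k < d./2.+1) [~ gat g k.*2.-1, gat g k.*2])
   * pw_ev s g)%g.

Definition unitri (p : nat) (u : {'GL_4['F_p]}) : bool :=
  [forall i : 'I_4, forall j : 'I_4,
     ((j < i)%N ==> (GLval u i j == 0%R)) && ((i == j) ==> (GLval u i j == 1%R))].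

Definition U4 (p : nat) : {group {'GL_4['F_p]}} :=
  (<<[set u | unitri u]>>)%G.

Definition Z4 (p : nat) : {group {'GL_4['F_p]}} := ('Z(U4 p))%G.

Definition superdiag (p d : nat) (psi : 'I_3 -> 'I_d -> 'F_p)
    (M : 'M['F_p]_4) (j : 'I_d) : Prop :=
  forall i : 'I_3, M (inord i) (inord i.+1) = psi i j.

(* For G = < x_1..x_d | r >: every defined 3-fold Massey product
   <psi_1,psi_2,psi_3> vanishes.  Continuous homomorphisms G -> P (P a finite
   p-group) are tuples of images of the generators satisfying the relator. *)
Definition massey3_vanish (p d : nat)
    (rel : forall gT : finGroupType, ('I_d -> gT) -> gT) : Prop :=
  forall psi : 'I_3 -> 'I_d -> 'F_p,
    (exists u : 'I_d -> coset_of (Z4 p),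
        [/\ forall j, u j \in (U4 p / Z4 p)%g,
            rel _ u = 1%g &
            forall j, exists2 h, h \in U4 p &
               coset (Z4 p) h = u j /\ superdiag psi (GLval h) j]) ->
    (exists g : 'I_d -> {'GL_4['F_p]},
        [/\ forall j, g j \in U4 p,
            rel _ g = 1%g &
            forall j, superdiag psi (GLval (g j)) j]).

(* Main.v *)
Require Import Defs.
From HB Require Import structures.
From mathcomp Require Import all_boot all_order all_algebra all_fingroup all_solvable.
From mathcomp Require Import ring zify.
Set Implicit Arguments. Unset Strict Implicit. Unset Printing Implicit Defensive.
Import GRing.Theory.

Section Co.
Variable p : nat.
Local Notation F := 'F_p.
Local Open Scope ring_scope.
Record co := Co { ca : F; cb : F; cc : F; cx : F; cy : F; cz : F }.

Definition ent (v : co) (i j : nat) : F :=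
  match i, j with
  | 0, 0 | 1, 1 | 2, 2 | 3, 3 => 1
  | 0, 1 => ca v | 1, 2 => cb v | 2, 3 => cc v
  | 0, 2 => cx v | 1, 3 => cy v | 0, 3 => cz v
  | _, _ => 0 end.

Definition mk (v : co) : 'M[F]_4 := \matrix_(i, j) ent v i j.

Definition cmul (v w : co) : co :=
  Co (ca v + ca w) (cb v + cb w) (cc v + cc w)
     (cx v + cx w + ca v * cb w) (cy v + cy w + cb v * cc w)
     (cz v + cz w + ca v * cy w + cx v * cc w).
Definition cone : co := Co 0 0 0 0 0 0.
Definition cinv (v : co) : co :=
  Co (- ca v) (- cb v) (- cc v) (- cx v + ca v * cb v) (- cy v + cb v * cc v)
     (- cz v + ca v * cy v + cx v * cc v - ca v * cb v * cc v).
Definition ccomm v w := cmul (cinv v) (cmul (cinv w) (cmul v w)).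
Definition cZ t := Co 0 0 0 0 0 t.

Lemma co_ext v w : ca v = ca w -> cb v = cb w -> cc v = cc w -> cx v = cx w ->
  cy v = cy w -> cz v = cz w -> v = w.
Proof. by case: v => ??????; case: w => ?????? /= -> -> -> -> -> ->. Qed.

Ltac coring := apply: co_ext => /=; ring.

Lemma mk_mul v w : mk v *m mk w = mk (cmul v w).
Proof.
apply/matrixP => i j; rewrite !mxE !big_ord_recl big_ord0 !mxE.
case: i => [[|[|[|[|i]]]] Hi] //; case: j => [[|[|[|[|j]]]] Hj] //=; ring.
Qed.

Lemma mk_one : mk cone = 1%:M.
Proof.
apply/matrixP => i j; rewrite !mxE.
by case: i => [[|[|[|[|i]]]] Hi] //; case: j => [[|[|[|[|j]]]] Hj].
Qed.

Lemma cmulV v : cmul v (cinv v) = cone. Proof. coring. Qed.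
Lemma cmulVl v : cmul (cinv v) v = cone. Proof. coring. Qed.

Definition cof (M : 'M[F]_4) : co :=
  Co (M (inord 0) (inord 1)) (M (inord 1) (inord 2)) (M (inord 2) (inord 3))
     (M (inord 0) (inord 2)) (M (inord 1) (inord 3)) (M (inord 0) (inord 3)).

Lemma cof_mk v : cof (mk v) = v.
Proof. by case: v => *; rewrite /cof !mxE !inordK. Qed.

Lemma mk_unit v : mk v \is a GRing.unit.
Proof.
apply/GRing.unitrP; exists (mk (cinv v)).
by rewrite -!mulmxE !mk_mul cmulV cmulVl mk_one.
Qed.

Definition gel v : {'GL_4[F]} := FinRing.Unit (mk_unit v).

Lemma gelE v : GLval (gel v) = mk v. Proof. by []. Qed.

Definition isU (g : {'GL_4[F]}) v := GLval g = mk v.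

Lemma isU1 : isU 1%g cone. Proof. by rewrite /isU mk_one. Qed.
Lemma isUM g h v w : isU g v -> isU h w -> isU (g * h)%g (cmul v w).
Proof. by rewrite /isU GL_ME => -> ->; rewrite -mulmxE mk_mul. Qed.
Lemma isUV g v : isU g v -> isU (g^-1)%g (cinv v).
Proof.
rewrite /isU => Hg.
have -> : GLval (g^-1)%g = GLval (g^-1)%g * (mk v * mk (cinv v)).
  by rewrite -mulmxE mk_mul cmulV mk_one mulmxE mulr1.
by rewrite mulrA -Hg -GL_ME mulVg GL_1E mul1r.
Qed.
Lemma isUR g h v w : isU g v -> isU h w -> isU [~ g, h]%g (ccomm v w).
Proof.
move=> Hg Hh; rewrite commgEl conjgE.
by apply: isUM (isUV Hg) _; apply: isUM (isUV Hh) (isUM Hg Hh).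
Qed.
Lemma isU_inj g h v : isU g v -> isU h v -> g = h.
Proof. by rewrite /isU => Hg Hh; apply: val_inj; rewrite /= Hg Hh. Qed.
Lemma isU_fun g v w : isU g v -> isU g w -> v = w.
Proof. by rewrite /isU => -> /(congr1 cof); rewrite !cof_mk. Qed.

Lemma isU_eqv g v w : isU g v -> v = w -> isU g w.
Proof. by move=> H <-. Qed.

Definition cpow (v : co) (k : nat) : co :=
  Co (k%:R * ca v) (k%:R * cb v) (k%:R * cc v)
     (k%:R * cx v + 'C(k, 2)%:R * (ca v * cb v))
     (k%:R * cy v + 'C(k, 2)%:R * (cb v * cc v))
     (k%:R * cz v + 'C(k, 2)%:R * (ca v * cy v + cx v * cc v)
       + 'C(k, 3)%:R * (ca v * cb v * cc v)).

Lemma isUX g v k : isU g v -> isU (g ^+ k)%g (cpow v k).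
Proof.
move=> Hg; elim: k => [|k IH].
  by apply: isU_eqv isU1 _; rewrite /cpow /= !mul0r; coring.
rewrite expgSr; apply: isU_eqv (isUM IH Hg) _.
rewrite /cpow !binS bin1 !natrD; coring.
Qed.

Lemma unitriE (g : {'GL_4[F]}) : unitri g = (GLval g == mk (cof g)).
Proof.
apply/idP/eqP; last first.
  move=> E; rewrite /unitri E; apply/forallP => i; apply/forallP => j; rewrite !mxE.
  by case: i => [[|[|[|[|i]]]] Hi] //; case: j => [[|[|[|[|j]]]] Hj].
move/forallP => H; apply/matrixP => i j; move: (H i) => /forallP /(_ j).
rewrite !mxE /cof -(inord_val i) -(inord_val j).
case: i => [[|[|[|[|i]]]] Hi] //; case: j => [[|[|[|[|j]]]] Hj] //=;
  rewrite ?inordK //= ?eqxx //=.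
all: first [by move/eqP | by case/andP => /eqP].
Qed.

Lemma cofE (g : {'GL_4[F]}) v : isU g v -> cof (GLval g) = v.
Proof. by rewrite /isU => ->; rewrite cof_mk. Qed.

Definition Uset := [set g : {'GL_4[F]} | GLval g == mk (cof (GLval g))].

Lemma UsetP g : reflect (exists v, isU g v) (g \in Uset).
Proof.
rewrite inE; apply: (iffP eqP) => [E|[v Hv]]; first by exists (cof (GLval g)).
by rewrite (cofE Hv).
Qed.

Lemma isU_cof g : g \in Uset -> isU g (cof (GLval g)).
Proof. by rewrite inE => /eqP. Qed.

Lemma group_setU : group_set Uset.
Proof.
apply/group_setP; split; first by apply/UsetP; exists cone; exact: isU1.
by move=> x y /UsetP[v Hv] /UsetP[w Hw]; apply/UsetP; exists (cmul v w); exact: isUM.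
Qed.
Canonical Ugroup := Group group_setU.

Lemma U4E : U4 p = Ugroup.
Proof.
apply: val_inj => /=.
have -> : [set u | unitri u] = Uset by apply/setP => u; rewrite !inE unitriE.
exact: gen_set_id group_setU.
Qed.

Definition Aset := [set g : {'GL_4[F]} | (g \in Uset) &&
  [&& ca (cof (GLval g)) == 0, cb (cof (GLval g)) == 0 & cc (cof (GLval g)) == 0]].
Definition Bset := [set g : {'GL_4[F]} | (g \in Uset) && ((ca (cof (GLval g)) == 0) && (cc (cof (GLval g)) == 0))].
Definition Zset := [set g : {'GL_4[F]} | (g \in Uset) &&
  [&& ca (cof (GLval g)) == 0, cb (cof (GLval g)) == 0, cc (cof (GLval g)) == 0, cx (cof (GLval g)) == 0
    & cy (cof (GLval g)) == 0]].

Lemma AsetP g : reflect (exists x y z, isU g (Co 0 0 0 x y z)) (g \in Aset).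
Proof.
rewrite inE; apply: (iffP idP).
  case/andP => /isU_cof H /and3P[/eqP a /eqP b /eqP c].
  exists (cx (cof (GLval g))), (cy (cof (GLval g))), (cz (cof (GLval g))); apply: isU_eqv H _.
  by apply: co_ext.
case=> x [y [z H]]; rewrite (cofE H) /= !eqxx andbT.
by apply/UsetP; exists (Co 0 0 0 x y z).
Qed.

Lemma BsetP g : reflect (exists b x y z, isU g (Co 0 b 0 x y z)) (g \in Bset).
Proof.
rewrite inE; apply: (iffP idP).
  case/andP => /isU_cof H /andP[/eqP a /eqP c].
  exists (cb (cof (GLval g))), (cx (cof (GLval g))), (cy (cof (GLval g))), (cz (cof (GLval g))); apply: isU_eqv H _.
  by apply: co_ext.
case=> b [x [y [z H]]]; rewrite (cofE H) /= !eqxx andbT.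
by apply/UsetP; exists (Co 0 b 0 x y z).
Qed.

Lemma ZsetP g : reflect (exists t, isU g (cZ t)) (g \in Zset).
Proof.
rewrite inE; apply: (iffP idP).
  case/andP => /isU_cof H /and5P[/eqP a /eqP b /eqP c /eqP x /eqP y].
  exists (cz (cof (GLval g))); apply: isU_eqv H _.
  by apply: co_ext.
case=> t H; rewrite (cofE H) /= !eqxx /= andbT.
by apply/UsetP; exists (cZ t).
Qed.

Lemma group_setA : group_set Aset.
Proof.
apply/group_setP; split; first by apply/AsetP; exists 0, 0, 0; exact: isU1.
move=> g h /AsetP[x [y [z Hg]]] /AsetP[x' [y' [z' Hh]]]; apply/AsetP.
exists (x + x'), (y + y'), (z + z'); apply: isU_eqv (isUM Hg Hh) _; coring.
Qed.
Canonical Agroup := Group group_setA.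

Lemma lin0 (u w t : F) : u = w -> w - u = t -> t = 0.
Proof. by move=> ->; rewrite subrr. Qed.
Lemma lin0' (u w t : F) : u = w -> u - w = t -> t = 0.
Proof. by move=> ->; rewrite subrr. Qed.

Lemma Z4E : Z4 p = Zset :> {set _}.
Proof.
have -> : (Z4 p : {set _}) = ('Z(Ugroup))%g by rewrite /Z4 -U4E.
apply/setP => g; apply/centerP/idP.
  case=> /isU_cof Hg Hc.
  pose e1 := gel (Co 1 0 0 0 0 0); pose e2 := gel (Co 0 1 0 0 0 0).
  pose e3 := gel (Co 0 0 1 0 0 0).
  have cm (e : {'GL_4[F]}) v : isU e v -> cmul (cof (GLval g)) v = cmul v (cof (GLval g)).
    move=> He; have Ee : e \in Ugroup by apply/UsetP; exists v.
    by apply: isU_fun (isUM Hg He) _; rewrite (Hc e Ee); exact: isUM.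
  have E1 := cm _ _ (gelE (Co 1 0 0 0 0 0)); have E2 := cm _ _ (gelE (Co 0 1 0 0 0 0)).
  have E3 := cm _ _ (gelE (Co 0 0 1 0 0 0)).
  have b0 : cb (cof (GLval g)) = 0 by apply: lin0 (congr1 cx E1) _; rewrite /=; ring.
  have y0 : cy (cof (GLval g)) = 0 by apply: lin0 (congr1 cz E1) _; rewrite /=; ring.
  have x0 : cx (cof (GLval g)) = 0 by apply: lin0' (congr1 cz E3) _; rewrite /=; ring.
  have a0 : - ca (cof (GLval g)) = 0 by apply: lin0 (congr1 cx E2) _; rewrite /=; ring.
  have c0 : cc (cof (GLval g)) = 0 by apply: lin0 (congr1 cy E2) _; rewrite /=; ring.
  apply/ZsetP; exists (cz (cof (GLval g))); apply: isU_eqv Hg _; apply: co_ext => //.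
  by apply/eqP; rewrite -oppr_eq0 a0.
case/ZsetP => t Hg; split; first by apply/UsetP; exists (cZ t).
move=> h /UsetP[w Hh]; apply: isU_inj (isUM Hg Hh) _.
apply: isU_eqv (isUM Hh Hg) _; coring.
Qed.


Lemma AsubB g : g \in Aset -> g \in Bset.
Proof.
by case/AsetP => x [y [z H]]; apply/BsetP; exists 0, x, y, z.
Qed.

Lemma commB g h : g \in Bset -> h \in Bset -> commute g h.
Proof.
case/BsetP => b [x [y [z Hg]]]; case/BsetP => b' [x' [y' [z' Hh]]].
apply: isU_inj (isUM Hg Hh) _; apply: isU_eqv (isUM Hh Hg) _; coring.
Qed.

Lemma commZ g h : g \in Zset -> h \in Ugroup -> commute g h.
Proof.
case/ZsetP => t Hg /UsetP[w Hh].
apply: isU_inj (isUM Hg Hh) _; apply: isU_eqv (isUM Hh Hg) _; coring.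
Qed.

Lemma commUA g h : g \in Ugroup -> h \in Ugroup -> ([~ g, h])%g \in Aset.
Proof.
move=> /UsetP[v Hg] /UsetP[w Hh]; apply/AsetP.
exists (cx (ccomm v w)), (cy (ccomm v w)), (cz (ccomm v w)).
apply: isU_eqv (isUR Hg Hh) _; apply: co_ext => //=; ring.
Qed.

Lemma der2U (H : {group {'GL_4[F]}}) : H \subset Ugroup -> (H^`(2))%g = 1%g.
Proof.
move=> sHU.
have H1 : (H^`(1) \subset Aset)%g.
  rewrite derg1 /commutator -[Aset]/(gval Agroup) gen_subG.
  apply/subsetP => _ /imset2P[x y Hx Hy ->].
  by apply: commUA; apply: (subsetP sHU).
rewrite dergSn; apply/commG1P; apply/centsP => x Hx y Hy.
by apply: commB; apply: AsubB; apply: (subsetP H1).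
Qed.
Section Prime.
Hypothesis p_pr : prime p.

Lemma natF0 k : (p %| k)%N -> (k%:R : F) = 0.
Proof. by rewrite (dvdn_pcharf (pchar_Fp p_pr)) => /eqP. Qed.

Lemma cpow1 v k : (p %| k)%N -> (p %| 'C(k, 2))%N -> (p %| 'C(k, 3))%N ->
  cpow v k = cone.
Proof.
move=> /natF0 h1 /natF0 h2 /natF0 h3; rewrite /cpow h1 h2 h3; coring.
Qed.

Lemma dvd_bin_p2 : (p %| 'C(p ^ 2, 2))%N && (p %| 'C(p ^ 2, 3))%N.
Proof.
have pd : (p %| p ^ 2)%N by rewrite dvdn_exp.
have e2 := mul_bin_diag (p ^ 2) 1; have e3 := mul_bin_diag (p ^ 2) 2.
have H2 : (p %| 2 * 'C(p ^ 2, 2))%N by rewrite -e2 dvdn_mulr.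
have H3 : (p %| 3 * 'C(p ^ 2, 3))%N by rewrite -e3 dvdn_mulr.
rewrite Euclid_dvdM // in H2; rewrite Euclid_dvdM // in H3.
case/orP: H2 => [|->]; first by rewrite dvdn_prime2 // => /eqP ->.
case/orP: H3 => [|->] //; by rewrite dvdn_prime2 // => /eqP ->.
Qed.

Lemma expU g : g \in Ugroup -> (g ^+ (p ^ 2))%g = 1%g.
Proof.
move=> /isU_cof H; apply: isU_inj (isUX _ H) _.
case/andP: dvd_bin_p2 => h2 h3.
by rewrite cpow1 ?dvdn_exp //; exact: isU1.
Qed.

Lemma expU5 g : (5 <= p)%N -> g \in Ugroup -> (g ^+ p)%g = 1%g.
Proof.
move=> p5 /isU_cof H; apply: isU_inj (isUX _ H) _.
rewrite cpow1 ?dvdnn ?prime_dvd_bin //; last by apply/andP; split => //; apply: leq_trans p5.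
  exact: isU1.
by apply/andP; split => //; apply: leq_trans p5.
Qed.

Lemma pgroupU : (p.-group Ugroup)%g.
Proof.
apply/pgroupP => r r_pr rd; case: (Cauchy r_pr rd) => x Hx ox.
have : (#[x]%g %| p ^ 2)%N by rewrite order_dvdn expU.
by rewrite ox Euclid_dvdX // dvdn_prime2 // andbT.
Qed.
End Prime.
End Co.
Section BB.
Local Open Scope group_scope.

Lemma prod_mod (gT : finGroupType) (F F' : nat -> gT) a b k0 (c : gT) :
  (a <= k0 < b)%N -> (forall k, (a <= k < b)%N -> k != k0 -> F' k = F k) ->
  F' k0 = F k0 * c -> (forall k, commute c (F k)) ->
  \prod_(a <= k < b) F' k = (\prod_(a <= k < b) F k) * c.
Proof.
move=> /andP[ak kb] HF Hk0 Hc.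
have ak' : (a <= k0 <= b)%N by rewrite ak ltnW.
have kb' := ltnW kb.
have bc (G : nat -> gT) : \prod_(a <= k < b) G k = \prod_(a <= k < k0) G k * \prod_(k0 <= k < b) G k.
  exact: big_cat_nat.
rewrite bc [in RHS]bc (big_ltn kb) [in RHS](big_ltn kb) Hk0.
have E1 : \prod_(a <= k < k0) F' k = \prod_(a <= k < k0) F k.
  apply: eq_big_nat => k /andP[k1 k2]; apply: HF; first by rewrite k1 (ltn_trans k2).
  by rewrite ltn_eqF.
have E2 : \prod_(k0.+1 <= k < b) F' k = \prod_(k0.+1 <= k < b) F k.
  apply: eq_big_nat => k /andP[k1 k2]; apply: HF; first by rewrite k2 andbT (leq_trans ak) // ltnW.
  by rewrite gtn_eqF.
have cP : commute c (\prod_(k0.+1 <= k < b) F k).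
  by apply: (big_ind (commute c)) => //; [exact: commute1 | move=> x y; exact: commuteM].
by rewrite E1 E2 -!mulgA cP.
Qed.

Section Rel.
Variable d : nat.

Definition Pr (gT : finGroupType) (g : 'I_d -> gT) : gT :=
  \prod_(1 <= k < d./2.+1) [~ gat g k.*2.-1, gat g k.*2].
Definition relnos q n (gT : finGroupType) (g : 'I_d -> gT) : gT :=
  gat g 0 ^+ q * iterc (gat g 0) (gat g 1) n * Pr g.

Lemma relatorE (p : nat) q n (s : pword p d) (gT : finGroupType) (g : 'I_d -> gT) :
  relator q n s g = relnos q n g * pw_ev s g.
Proof. by []. Qed.

Lemma gat_ord (gT : finGroupType) (g : 'I_d -> gT) (i : 'I_d) : gat g i = g i.
Proof. by rewrite /gat valK. Qed.

Lemma gat_in (gT : finGroupType) (g : 'I_d -> gT) (P : pred gT) k :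
  (forall i, P (g i)) -> P 1 -> P (gat g k).
Proof. by rewrite /gat; case: insubP => [i _ _|_] /=. Qed.

Lemma gat_comp (gT hT : finGroupType) (g : 'I_d -> gT) (h : 'I_d -> hT) (f : hT -> gT) k :
  (forall i, g i = f (h i)) -> f 1 = 1 -> gat g k = f (gat h k).
Proof. by rewrite /gat => H H1; case: insubP => [i _ _|_] /=. Qed.

Lemma iterc_morph (aT rT : finGroupType) (D : {group aT}) (f : {morphism D >-> rT})
   y x n : y \in D -> x \in D -> f (iterc y x n) = iterc (f y) (f x) n /\ iterc y x n \in D.
Proof.
move=> Dy Dx; elim: n => [|n [IH1 IH2]] //=.
by rewrite /iterc /= -/(iterc y x n) morphR // IH1 groupR.
Qed.

Lemma relnos_morph (aT rT : finGroupType) (D : {group aT}) (f : {morphism D >-> rT})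
   q n (h : 'I_d -> aT) (u : 'I_d -> rT) :
  (forall i, h i \in D) -> (forall i, u i = f (h i)) ->
  f (relnos q n h) = relnos q n u /\ relnos q n h \in D.
Proof.
move=> Dh Hu.
have gE k : gat u k = f (gat h k) by apply: gat_comp => //; rewrite morph1.
have gD k : gat h k \in D by apply: (@gat_in _ _ (fun x => x \in D)).
have PD : Pr h \in D by apply: group_prod => k _; rewrite groupR.
have [I1 I2] := iterc_morph f n (gD 0%N) (gD 1%N).
rewrite /relnos !groupM ?groupX // !morphM ?groupM ?groupX // morphX // I1 -!gE.
split => //; congr (_ * _); rewrite /Pr morph_prod; last by move=> k _; rewrite groupR.
by apply: eq_bigr => k _; rewrite morphR // -!gE.
Qed.
End Rel.

End BB.

Section C.
Variable p : nat.
Local Notation F := 'F_p.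
Local Notation GL := {'GL_4[F]}.
Local Notation U := (Ugroup p).
Ltac coring := apply: co_ext => /=; ring.
Local Open Scope ring_scope.

Lemma iterc2Z (y x : GL) : y \in U -> x \in U -> iterc y x 2 \in Zset p.
Proof.
move=> /UsetP[v Hy] /UsetP[w Hx]; apply/ZsetP.
exists (cz (ccomm (ccomm v w) w)); apply: isU_eqv (isUR (isUR Hy Hx) Hx) _.
apply: co_ext => //=; ring.
Qed.

Lemma iterc_ge3 (y x : GL) n : y \in U -> x \in U -> (3 <= n)%N -> iterc y x n = 1%g.
Proof.
move=> Hy Hx; elim: n => [|n IH] // n3.
have [n2|n2] := leqP 3 n.
  by rewrite /iterc /= -/(iterc y x n) IH // comm1g.
have -> : n = 2 by lia.
rewrite /iterc /= -/(iterc y x 2); apply/eqP/commgP.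
by apply: commZ (iterc2Z Hy Hx) Hx.
Qed.

Lemma BsubU g : g \in Bset p -> g \in U.
Proof. by rewrite inE => /andP[]. Qed.
Lemma AsubU g : g \in Aset p -> g \in U.
Proof. by rewrite inE => /andP[]. Qed.
Lemma ZsubU g : g \in Zset p -> g \in U.
Proof. by rewrite inE => /andP[]. Qed.

Lemma itercB (y x : GL) n : y \in U -> x \in Bset p -> (2 <= n)%N -> iterc y x n = 1%g.
Proof.
move=> Hy Hx; have HxU := BsubU Hx.
have [n3|n3] := leqP 3 n; first by rewrite iterc_ge3.
move=> n2; have -> : n = 2 by lia.
rewrite /iterc /=; apply/eqP/commgP; apply: commB Hx.
exact/AsubB/commUA.
Qed.

Lemma iterc_mulA (y x e : GL) n : y \in U -> x \in U -> e \in Aset p -> (2 <= n)%N ->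
  iterc y (x * e)%g n = iterc y x n.
Proof.
move=> Hy Hx He; have HxeU : (x * e)%g \in U by rewrite groupM // AsubU.
have [n3|n3] := leqP 3 n; first by rewrite !iterc_ge3.
move=> n2; have -> : n = 2 by lia.
case/UsetP: Hy => v Hy; case/UsetP: Hx => w Hx; case/AsetP: He => X [Y [Z He]].
rewrite /iterc /=; apply: isU_inj (isUR (isUR Hy (isUM Hx He)) (isUM Hx He)) _.
apply: isU_eqv (isUR (isUR Hy Hx) Hx) _; coring.
Qed.

Lemma one_B : (1%g : GL) \in Bset p.
Proof. by apply/BsetP; exists 0, 0, 0, 0; exact: isU1. Qed.

Lemma PrB d (g : 'I_d -> GL) : (forall i : 'I_d, (1 <= i)%N -> g i \in Bset p) ->
  Pr g = 1%g.
Proof.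
move=> H.
have gB k : (1 <= k)%N -> gat g k \in Bset p.
  move=> k1; rewrite /gat; case: insubP => [i _ Ei|_] /=; last exact: one_B.
  by apply: H; rewrite Ei.
rewrite /Pr big_nat_cond; apply: big1 => k /andP[/andP[k1 _] _].
by apply/eqP/commgP; apply: commB; apply: gB; lia.
Qed.

Lemma gat_upd d (gT : finGroupType) (h : 'I_d -> gT) (j' : nat) (e : gT) k :
  (j' < d)%N ->
  gat (fun l : 'I_d => if val l == j' then (h l * e)%g else h l) k =
  if k == j' then (gat h k * e)%g else gat h k.
Proof.
move=> jd; rewrite /gat; case: insubP => [i _ <-|Hk] //=.
case: eqP => // E; move: Hk; rewrite E jd //.
Qed.

Lemma s_one d (s : pword p d) (g : 'I_d -> GL) : prime p -> in_S2 s ->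
  (forall i, g i \in U) -> pw_ev s g = 1%g.
Proof.
move=> p_pr Hs HU.
have pg : (p.-group <<[set g i | i : 'I_d]>>)%g.
  apply: pgroupS (pgroupU p_pr); rewrite gen_subG.
  by apply/subsetP => _ /imsetP[i _ ->].
have := Hs _ g pg.
have -> : ((<<[set g i | i : 'I_d & (2 <= i)%N]>>)^`(2))%g = 1%g.
  apply: (der2U (H := <<[set g i | i : 'I_d & (2 <= i)%N]>>%G)).
  by rewrite gen_subG; apply/subsetP => _ /imsetP[i _ ->].
by rewrite inE => /eqP.
Qed.

Lemma sd_cof d (psi : 'I_3 -> 'I_d -> F) (M1 M2 : 'M[F]_4) j :
  ca (cof M1) = ca (cof M2) -> cb (cof M1) = cb (cof M2) -> cc (cof M1) = cc (cof M2) ->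
  superdiag psi M1 j -> superdiag psi M2 j.
Proof.
move=> Ha Hb Hc H i; rewrite -(H i).
case: i => [[|[|[|i]]] Hi] //=.
all: first [exact: (esym Ha) | exact: (esym Hb) | exact: (esym Hc)].
Qed.

Lemma sd_get d (psi : 'I_3 -> 'I_d -> F) (M : 'M[F]_4) j :
  superdiag psi M j ->
  [/\ ca (cof M) = psi ord0 j, cb (cof M) = psi (inord 1) j & cc (cof M) = psi (inord 2) j].
Proof.
move=> H; split; first exact: (H ord0).
  by have := H (inord 1); rewrite /= inordK.
by have := H (inord 2); rewrite /= inordK.
Qed.

Lemma sd_of d (psi : 'I_3 -> 'I_d -> F) (M : 'M[F]_4) j :
  ca (cof M) = psi ord0 j -> cb (cof M) = psi (inord 1) j -> cc (cof M) = psi (inord 2) j ->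
  superdiag psi M j.
Proof.
move=> Ha Hb Hc i.
case: i => [[|[|[|i]]] Hi] //=.
- by have -> : Ordinal Hi = ord0 by apply: val_inj.
- by have -> : Ordinal Hi = inord 1 by apply: val_inj; rewrite /= inordK.
- by have -> : Ordinal Hi = inord 2 by apply: val_inj; rewrite /= inordK.
Qed.

Lemma cid1 v w X Y : ccomm v (cmul w (Co 0 0 0 X Y 0)) =
  cmul (ccomm v w) (cZ (ca v * Y - X * cc v) : co p).
Proof. coring. Qed.
Lemma cid2 v w X Y : ccomm (cmul w (Co 0 0 0 X Y 0)) v =
  cmul (ccomm w v) (cZ (- (ca v * Y - X * cc v)) : co p).
Proof. coring. Qed.

Lemma solve (v : co p) t : (ca v != 0) || (cc v != 0) ->
  exists X Y, ca v * Y - X * cc v = t.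
Proof.
case/orP => H.
  exists 0, (t / ca v); rewrite mul0r subr0 mulrC divfK //.
exists (- t / cc v), 0; rewrite mulr0 sub0r divfK // opprK //.
Qed.

Lemma gat_nat d (gT : finGroupType) (h : 'I_d -> gT) k (H : (k < d)%N) :
  gat h k = h (Ordinal H).
Proof. by rewrite /gat insubT /=. Qed.

Lemma main_lift d q n (s : pword p d) (psi : 'I_3 -> 'I_d -> F) (h : 'I_d -> GL) :
  prime p -> (3 <= d)%N -> odd d -> (2 <= n)%N ->
  (forall g, g \in U -> (g ^+ q)%g = 1%g) -> in_S2 s ->
  (forall i, h i \in U) -> (forall j, superdiag psi (GLval (h j)) j) ->
  relnos q n h \in Zset p ->
  exists g : 'I_d -> GL, [/\ forall j, g j \in U4 p, relator q n s g = 1%g &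
                          forall j, superdiag psi (GLval (g j)) j].
Proof.
move=> p_pr d3 dodd n2 Hq Hs HU Hsd HZ.
pose bad (g : GL) := (ca (cof (GLval g)) != 0) || (cc (cof (GLval g)) != 0).
have gU k : gat h k \in U by apply: (@gat_in _ _ _ (fun x => x \in U)).
have d1 : (1 < d)%N by lia.
case: (boolP [exists i : 'I_d, (1 <= i)%N && bad (h i)]) => [/existsP[i /andP[i1 bi]] | nb];
    last first.
  have hB : forall i : 'I_d, (1 <= i)%N -> h i \in Bset p.
    move/existsPn: nb => nb i i1; have := nb i; rewrite i1 /= /bad negb_or !negbK.
    case/andP => /eqP a /eqP c; apply/BsetP.
    exists (cb (cof (GLval (h i)))), (cx (cof (GLval (h i)))), (cy (cof (GLval (h i)))), (cz (cof (GLval (h i)))).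
    by apply: isU_eqv (isU_cof (HU i)) _; apply: co_ext.
  exists h; split => //; first by move=> j; rewrite U4E HU.
  rewrite relatorE /relnos s_one // PrB // itercB //; last by rewrite (gat_nat _ d1) hB.
  by rewrite Hq ?mulg1.
set v := cof (GLval (h i)).
have Hv : isU (h i) v := isU_cof (HU i).
case/ZsetP: HZ => z Hz.
have [k0 [k0r k0i]] : exists k0, (1 <= k0 <= d./2)%N /\ (k0.*2.-1 = i \/ k0.*2 = i).
  exists (i.+1)./2; have id := ltn_ord i; have := odd_double_half d; rewrite dodd => ed; lia.
pose b := k0.*2.-1 == i.
pose t := if b then - z else z.
have [X [Y HXY]] := solve t bi.
pose e := gel (Co 0 0 0 X Y 0).
have He : isU e (Co 0 0 0 X Y 0) := gelE _.
have eA : e \in Aset p by apply/AsetP; exists X, Y, 0.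
have eU : e \in U := AsubU eA.
pose j' := if b then k0.*2 else k0.*2.-1.
have j'd : (j' < d)%N by rewrite /j'; case: (b); have := odd_double_half d; rewrite dodd; lia.
have j'1 : (1 <= j')%N by rewrite /j'; case: (b); lia.
pose g := fun l : 'I_d => if val l == j' then (h l * e)%g else h l.
have gl l : g l = if val l == j' then (h l * e)%g else h l by [].
have gUl l : g l \in U by rewrite gl; case: (_ == _); rewrite ?groupM.
have gg k : gat g k = if k == j' then (gat h k * e)%g else gat h k by exact: gat_upd.
exists g; split => //.
- by move=> l; rewrite U4E.
- rewrite relatorE s_one // mulg1 /relnos !gg.
  have -> : (0 == j') = false by apply/eqP; lia.
  have -> : iterc (gat h 0) (if 1%N == j' then (gat h 1 * e)%g else gat h 1) n =
            iterc (gat h 0) (gat h 1) n by case: (_ == _); rewrite ?iterc_mulA.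
  pose c := gel (cZ (- z)).
  have Hc : isU c (cZ (- z)) := gelE _.
  have cZs : c \in Zset p by apply/ZsetP; exists (- z).
  have -> : Pr g = (Pr h * c)%g.
    apply: (prod_mod (k0 := k0)); first by lia.
    - move=> k kr kk0; rewrite !gg.
      have -> : (k.*2.-1 == j') = false by apply/eqP; rewrite /j'; case: (b); lia.
      by have -> : (k.*2 == j') = false by apply/eqP; rewrite /j'; case: (b); lia.
    - rewrite !gg /j'; case Eb: b.
        have Eb' : k0.*2.-1 = i by apply/eqP.
        have -> : (k0.*2.-1 == k0.*2) = false by apply/eqP; lia.
        rewrite eqxx Eb' gat_ord.
        have Hw := isU_cof (gU k0.*2).
        apply: isU_inj (isUR Hv (isUM Hw He)) _.
        rewrite cid1 HXY /t Eb; exact: isUM (isUR Hv Hw) Hc.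
      have Eb' : k0.*2 = i by case: k0i => // E; move: Eb; rewrite /b E eqxx.
      have -> : (k0.*2 == k0.*2.-1) = false by apply/eqP; lia.
      rewrite eqxx Eb' gat_ord.
      have Hw := isU_cof (gU i.-1).
      apply: isU_inj (isUR (isUM Hw He) Hv) _.
      rewrite cid2 HXY /t Eb; exact: isUM (isUR Hw Hv) Hc.
    - by move=> k; apply: commZ cZs _; rewrite groupR.
  rewrite !mulgA; apply: isU_inj (isUM Hz Hc) _.
  apply: isU_eqv (isU1 p) _; coring.
- move=> l; rewrite gl; case: (_ == _) => //.
  have Hl := isU_cof (HU l); have E := cofE (isUM Hl He).
  by apply: sd_cof (Hsd l); rewrite E /= addr0.
Qed.
End C.

Section D.
Variable p : nat.
Local Notation F := 'F_p.
Local Notation GL := {'GL_4[F]}.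
Local Notation U := (Ugroup p).

Lemma U4N : (U4 p \subset 'N(Z4 p))%g.
Proof. exact: normal_norm (center_normal (U4 p)). Qed.

Lemma sQ_one d (s : pword p d) (u : 'I_d -> coset_of (Z4 p)) : prime p -> in_S2 s ->
  (forall i, u i \in (U4 p / Z4 p)%g) -> pw_ev s u = 1%g.
Proof.
move=> p_pr Hs HU.
have pQ : (p.-group (U4 p / Z4 p))%g by apply: quotient_pgroup; rewrite U4E; exact: pgroupU.
have pg : (p.-group <<[set u i | i : 'I_d]>>)%g.
  apply: pgroupS pQ; rewrite gen_subG.
  by apply/subsetP => _ /imsetP[i _ ->].
have := Hs _ u pg.
set H := <<_>>%g.
have sH : (H \subset U4 p / Z4 p)%g.
  by rewrite gen_subG; apply/subsetP => _ /imsetP[i _ ->].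
have := dergS 2 sH; rewrite -quotient_der ?U4N // U4E der2U // quotient1.
by move=> /subsetP S /S; rewrite inE => /eqP.
Qed.

Lemma relnos_Z d q n (h : 'I_d -> GL) (u : 'I_d -> coset_of (Z4 p)) :
  (forall i, h i \in U4 p) -> (forall i, u i = coset (Z4 p) (h i)) ->
  relnos q n u = 1%g -> relnos q n h \in Zset p.
Proof.
move=> hU Hu Hr.
have hN i : (h i \in 'N(Z4 p))%g by apply: (subsetP U4N).
have [E N] := @relnos_morph d _ _ _ (coset_morphism (Z4 p)) q n h u hN Hu.
rewrite -Z4E; apply: coset_idr N _.
by rewrite -Hr -E.
Qed.
End D.

Definition sdb p d (psi : 'I_3 -> 'I_d -> 'F_p) (M : 'M['F_p]_4) j : bool :=
  [forall i : 'I_3, M (inord i) (inord i.+1) == psi i j].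
Lemma sdbP p d (psi : 'I_3 -> 'I_d -> 'F_p) M j : reflect (superdiag psi M j) (sdb psi M j).
Proof. by apply: (iffP forallP) => H i; [apply/eqP | apply/eqP]. Qed.

Lemma backward (p d n q : nat) (s : pword p d) :
  prime p -> odd d -> (3 <= d)%N -> (2 <= n)%N ->
  (forall g, g \in Ugroup p -> (g ^+ q)%g = 1%g) -> in_S2 s ->
  @massey3_vanish p d (@relator p d q n s).
Proof.
move=> p_pr dodd d3 n2 Hq Hs psi [u [uQ ru Hl]].
have hex j : exists h, [&& h \in U4 p, coset (Z4 p) h == u j & sdb psi (GLval h) j].
  case: (Hl j) => h hU [hc hs]; exists h; rewrite hU hc eqxx /=; exact/sdbP.
pose h j := xchoose (hex j).
have hP j : [&& h j \in U4 p, coset (Z4 p) (h j) == u j & sdb psi (GLval (h j)) j].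
  exact: (xchooseP (hex j)).
have hU4 j : h j \in U4 p by case/and3P: (hP j).
have hU j : h j \in Ugroup p by rewrite -U4E.
have hu j : u j = coset (Z4 p) (h j) by case/and3P: (hP j) => _ /eqP.
have hs j : superdiag psi (GLval (h j)) j by case/and3P: (hP j) => _ _ /sdbP.
apply: (main_lift p_pr d3 dodd n2 Hq Hs hU hs).
apply: (relnos_Z hU4 hu).
by move: ru; rewrite relatorE sQ_one // mulg1.
Qed.

Lemma forward3 d n (s : pword 3 d) : odd d -> (3 <= d)%N -> (2 <= n)%N -> in_S2 s ->
  ~ @massey3_vanish 3 d (@relator 3 d 3 n s).
Proof.
move=> dodd d3 n2 Hs Hv.
have p3 : prime 3 by [].
have d0 : (0 < d)%N by lia.
have d1 : (1 < d)%N by lia.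
pose psi : 'I_3 -> 'I_d -> 'F_3 := fun i j => if val j == 0%N then 1%R else 0%R.
pose v0 : co 3 := Co 1%R 1%R 1%R 0%R 0%R 0%R.
pose hh : 'I_d -> {'GL_4['F_3]} := fun j => if val j == 0%N then gel v0 else 1%g.
have hhU j : hh j \in Ugroup 3.
  rewrite /hh; case: (_ == _); last exact: group1.
  by apply/UsetP; exists v0; exact: gelE.
have hhU4 j : hh j \in U4 3 by rewrite U4E.
have hhs j : superdiag psi (GLval (hh j)) j.
  have E1 : (1%R : 'M['F_3]_4) = mk (cone 3) by rewrite mk_one.
  apply: sd_of; rewrite /hh /psi; case: (_ == _); rewrite ?gelE ?GL_1E ?E1 cof_mk //.
pose u j := coset (Z4 3) (hh j).
have [g [gU rg gs]] : exists g : 'I_d -> {'GL_4['F_3]}, [/\ forall j, g j \in U4 3,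
    relator 3 n s g = 1%g & forall j, superdiag psi (GLval (g j)) j].
  apply: Hv; exists u; split.
  - by move=> j; apply: mem_quotient; exact: hhU4.
  - rewrite relatorE sQ_one //; last by move=> j; apply: mem_quotient; exact: hhU4.
    rewrite mulg1.
    have hN i : (hh i \in 'N(Z4 3))%g by apply: (subsetP (U4N 3)); exact: hhU4.
    have [E N] := @relnos_morph d _ _ _ (coset_morphism (Z4 3)) 3 n hh u hN (fun i => erefl).
    rewrite -E; apply: coset_id; rewrite Z4E.
    have hB (i : 'I_d) : (1 <= i)%N -> hh i \in Bset 3.
      move=> i1; rewrite /hh; change (val i) with (nat_of_ord i); have -> : (nat_of_ord i == 0%N) = false by apply/eqP; lia.
      exact: one_B.
    have gU k : gat hh k \in Ugroup 3 by apply: (@gat_in _ _ _ (fun x => x \in Ugroup 3)).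
    rewrite /relnos PrB // itercB ?gU //; last by rewrite (gat_nat _ d1) hB.
    rewrite ?mulg1 (gat_nat _ d0) /hh /=.
    apply/ZsetP; exists 1%R; apply: isU_eqv (isUX 3 (gelE v0)) _.
    have h3 : (3%:R : 'F_3)%R = 0%R by apply: natF0.
    have c32 : 'C(3, 2) = 3 by []. have c33 : 'C(3, 3) = 1 by [].
    rewrite /cpow c32 c33 h3; apply: co_ext => /=; ring.
  - by move=> j; exists (hh j); [exact: hhU4 | split].

have gUg j : g j \in Ugroup 3 by rewrite -U4E.
have gB (i : 'I_d) : (1 <= i)%N -> g i \in Bset 3.
  move=> i1; have [Ha _ Hc] := sd_get (gs i).
  have i0 : (val i == 0%N) = false by change (val i) with (nat_of_ord i); apply/eqP; lia.
  apply/BsetP; exists (cb (cof (GLval (g i)))), (cx (cof (GLval (g i)))),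
    (cy (cof (GLval (g i)))), (cz (cof (GLval (g i)))).
  apply: isU_eqv (isU_cof (gUg i)) _; apply: co_ext; rewrite ?Ha ?Hc /psi ?i0 //=.
have gUk k : gat g k \in Ugroup 3 by apply: (@gat_in _ _ _ (fun x => x \in Ugroup 3)).
move: rg; rewrite relatorE s_one // mulg1 /relnos PrB // itercB ?gUk //; last first.
  by rewrite (gat_nat _ d1) gB.
rewrite !mulg1 (gat_nat _ d0) => E.
set g0 := g _ in E.
have H0 := isU_cof (gUg (Ordinal d0)); rewrite -/g0 in H0.
have [Ha Hb Hc] := sd_get (gs (Ordinal d0)); rewrite -/g0 in Ha Hb Hc.
have := isU_fun (isUX 3 H0) (eq_ind_r (fun x => isU x (cone 3)) (isU1 3) E).
move: Ha Hb Hc; generalize (cof (GLval g0)) => w Ha Hb Hc /(congr1 (@cz 3)) /=.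
rewrite Ha Hb Hc /psi /=.
have h3 : (3%:R : 'F_3)%R = 0%R by apply: natF0.
have c32 : 'C(3, 2) = 3 by []. have c33 : 'C(3, 3) = 1 by [].
rewrite c32 c33 h3 !mul0r !add0r !mul1r; move/eqP; rewrite oner_eq0.
done.
Qed.

Lemma expq (p q : nat) : prime p ->
  ((exists f, 1 <= f /\ (p = 2 -> 2 <= f) /\ q = p ^ f) \/ q = 0)%N -> q != 3 ->
  forall g, g \in Ugroup p -> (g ^+ q)%g = 1%g.
Proof.
move=> p_pr Hqf q3 g gU.
have p1 := prime_gt1 p_pr.
case: Hqf => [[f [f1 [f2 Eq]]]| Eq]; subst q; first last.
  by rewrite expg0.
have [f2'|f1'] := leqP 2 f.
  have -> : f = (f - 2) + 2 by lia.
  by rewrite expnD mulnC expgnA expU // expg1n.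
have f1e : f = 1 by lia.
subst f; rewrite expn1 in q3 *.
have p2 : p != 2 by apply/eqP => E; have := f2 E; lia.
apply: expU5 => //.
have p4 : p != 4 by apply/eqP => E; move: p_pr; rewrite E.
move: q3 p2 p4 p1; clear; lia.
Qed.

Theorem proposition5p5 (p d n q : nat) (s : pword p d) :
  prime p -> odd d -> 3 <= d -> 2 <= n ->
  ((exists f, 1 <= f /\ (p = 2 -> 2 <= f) /\ q = p ^ f) \/ q = 0) ->
  in_S2 s ->
  (@massey3_vanish p d (@relator p d q n s) <-> q != 3).
Proof.
move=> p_pr dodd d3 n2 Hqf Hs; split; last first.
  by move=> q3; apply: backward => //; apply: expq.
move=> Hv; apply/eqP => q3; subst q.
have p3 : p = 3.
  case: Hqf => [[f [f1 [_ E]]]|] //.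
  have : (p %| 3)%N by rewrite E dvdn_exp.
  by rewrite dvdn_prime2 // => /eqP.
subst p; exact: forward3 Hv.
Qed.
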